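(* Let $k\in\mathbb Z_{\ge1}$. With probability $1-\mathrm{negl}(n)$ over $G\sim G(n,1/2)$ the following holds: for every vertex set $S\subseteq[n]$ of size $k$ and every family $\mathcal C\subseteq\{C:\emptyset\ne C\subseteq S\}$ there exists a vertex $v\notin S$ such that for every $\emptyset\ne C\subseteq S$, we have $C\in\mathcal C$ if and only if the number of vertices that are adjacent to every vertex in $\{v\}\cup C$ is odd.
   Context: $G(n,1/2)$ is the uniform distribution over simple graphs on vertex set $[n]$ (each pair an edge independently with probability $1/2$). A function is negligible ($\mathrm{negl}(n)$) if eventually below $1/p(n)$ in absolute value for every polynomial $p$. *)

(* Defs.v *)
From mathcomp Require Import all_boot all_order all_algebra.
Set Implicit Arguments. Unset Strict Implicit. Unset Printing Implicit Defensive.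
Import Order.TTheory GRing.Theory Num.Theory.

(* Simple graphs on vertex set [n] = 'I_n, given by their edge set:
   a set of 2-element subsets of 'I_n. *)
Definition pairs (n : nat) : {set {set 'I_n}} := [set e : {set 'I_n} | #|e| == 2].

Definition is_graph (n : nat) (E : {set {set 'I_n}}) : bool := E \subset pairs n.

Definition adj (n : nat) (E : {set {set 'I_n}}) (u v : 'I_n) : bool :=
  (u != v) && ([set u; v] \in E).

Definition common_nbrs (n : nat) (E : {set {set 'I_n}}) (A : {set 'I_n}) : nat :=
  #|[set w : 'I_n | [forall x in A, adj E w x]]|.

Definition good_graph (k n : nat) (E : {set {set 'I_n}}) : bool :=
  [forall S : {set 'I_n}, (#|S| == k) ==>
   [forall CC : {set {set 'I_n}},
     (CC \subset [set C : {set 'I_n} | (C \subset S) && (C != set0)]) ==>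
     [exists v : 'I_n, (v \notin S) &&
       [forall C : {set 'I_n}, ((C \subset S) && (C != set0)) ==>
          ((C \in CC) == odd (common_nbrs E (v |: C)))]]]].

(* Probability, for G ~ G(n,1/2) (uniform over all simple graphs on [n]),
   that P fails. *)
Definition prob_fail (P : forall n : nat, {set {set 'I_n}} -> bool) (n : nat) : rat :=
  (#|[set E : {set {set 'I_n}} | is_graph E && ~~ P n E]|%:R
    / (2 ^ #|pairs n|)%:R)%R.

(* Negligible: eventually below 1/p(n) in absolute value for every polynomial p
   (with positive leading coefficient, so that 1/p(n) is eventually positive). *)
Definition negligible (f : nat -> rat) : Prop :=
  forall p : {poly rat}, (0 < lead_coef p)%R ->
    exists N : nat, forall n : nat, (N <= n)%N ->
      (`|f n| < (p.[n%:R])^-1)%R.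

(* Main.v *)
Require Import Defs.
From mathcomp Require Import all_boot all_order all_algebra.
From mathcomp Require Import zify.
From mathcomp Require Import polyrcf.
Set Implicit Arguments. Unset Strict Implicit. Unset Printing Implicit Defensive.

Lemma leq_pow_base m n e : m <= n -> m ^ e <= n ^ e.
Proof. move=> H; elim: e => [|e IH]; rewrite ?expn0 // !expnS leq_mul //. Qed.

Lemma card_bigcup_disj (a I : finType) (J : {set I}) (D : I -> {set a}) :
 (forall i j, i \in J -> j \in J -> i != j -> [disjoint D i & D j]) ->
 #|\bigcup_(i in J) D i| = \sum_(i in J) #|D i|.
Proof.
move=> Hd.
rewrite -sum1_card big_mkcond /=.
under [RHS]eq_bigr => i _ do rewrite -sum1_card big_mkcond /=.
rewrite [RHS]exchange_big /=; apply: eq_bigr => x _.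
case: (boolP (x \in \bigcup_(i in J) D i)) => [/bigcupP [i0 Hi0 Hx]|Hx].
  rewrite (bigD1 i0) //= Hx big1 // => i /andP [HiJ Hne].
  have := Hd _ _ HiJ Hi0 Hne; rewrite disjoint_sym => /disjointFr.
  by move=> /(_ _ Hx) ->.
rewrite big1 // => i HiJ; case: ifP => // Hxi.
by case/negP: Hx; apply/bigcupP; exists i.
Qed.

Lemma prod_count (a I : finType) (U : {set a}) (J : {set I}) (D : I -> {set a})
  (P : pred {set a}) (G : {set a} -> I -> {set a} -> bool) (d N : nat) :
  (forall i, i \in J -> D i \subset U) ->
  (forall i j, i \in J -> j \in J -> i != j -> [disjoint D i & D j]) ->
  (forall E : {set a}, E \subset U -> P E -> forall i, i \in J ->
      G (E :\: \bigcup_(j in J) D j) i (E :&: D i)) ->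
  (forall (ER : {set a}) i, ER \subset U :\: \bigcup_(j in J) D j -> i \in J ->
      #|[set Y : {set a} | (Y \subset D i) && G ER i Y]| * 2 ^ d <= (2 ^ d).-1 * 2 ^ #|D i|) ->
  N <= #|J| ->
  #|[set E : {set a} | (E \subset U) && P E]| * 2 ^ (d * N) <= 2 ^ #|U| * (2 ^ d).-1 ^ N.
Proof.
move=> HDU Hdis HPG Hc HN.
set UD := \bigcup_(j in J) D j.
set R := U :\: UD.
pose Fs (ER : {set a}) (i : I) : {set {set a}} := [set Y : {set a} | (Y \subset D i) && G ER i Y].
pose phi (E : {set a}) : {set a} * {ffun I -> {set a}} :=
  (E :\: UD, [ffun i => if i \in J then E :&: D i else set0]).
have phi_inj : injective phi.
  move=> E1 E2 [H1 H2]; apply/setP => x.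
  case: (boolP (x \in UD)) => [/bigcupP [i Hi Hx]|Hx].
    have := congr1 (fun f : {ffun I -> {set a}} => x \in f i) H2; rewrite !ffunE Hi !inE Hx !andbT.
    by [].
  have := congr1 (fun S : {set a} => x \in S) H1; rewrite !inE Hx.
  by [].
pose Pairs := [set p : {set a} * {ffun I -> {set a}} |
   (p.1 \subset R) && (p.2 \in pfamily set0 J (Fs p.1))].
have Hstep1 : #|[set E : {set a} | (E \subset U) && P E]| <= #|Pairs|.
  rewrite -(card_imset _ phi_inj); apply: subset_leq_card.
  apply/subsetP => p /imsetP [E]; rewrite inE => /andP [HEU HPE] ->.
  rewrite inE /=; apply/andP; split.
    by apply: setSD.
  apply/pfamilyP; split.
    apply/subsetP => i; rewrite !inE ffunE; case: ifP => // _; by rewrite eqxx.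
  move=> i Hi; rewrite ffunE Hi inE subsetIr /=.
  exact: HPG.
have HPairs : #|Pairs| = \sum_(ER : {set a} | ER \subset R) \prod_(i in J) #|Fs ER i|.
  rewrite -sum1_card.
  rewrite (eq_bigl (fun p : {set a} * {ffun I -> {set a}} => (p.1 \subset R) && (p.2 \in pfamily set0 J (Fs p.1)))); last first.
    by move=> p; rewrite inE.
  rewrite -(pair_big_dep (fun ER : {set a} => ER \subset R) (fun ER f => f \in pfamily set0 J (Fs ER)) (fun _ _ => 1)) /=.
  apply: eq_bigr => ER _.
  by rewrite sum1_card card_pfamily foldrE big_map big_enum.
have HRU : #|R| + \sum_(i in J) #|D i| = #|U|.
  rewrite -card_bigcup_disj // /R cardsDS.
    rewrite subnK //; apply: subset_leq_card; apply/bigcupsP => i; exact: HDU.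
  by apply/bigcupsP => i; exact: HDU.
have Hbound : forall ER : {set a}, ER \subset R ->
   \prod_(i in J) #|Fs ER i| * 2 ^ (d * #|J|) <= (2 ^ d).-1 ^ #|J| * 2 ^ (\sum_(i in J) #|D i|).
  move=> ER HER.
  rewrite mulnC expnM -prod_nat_const -prod_nat_const -big_split /= expn_sum -big_split /=.
  apply: leq_prod => i Hi; rewrite mulnC; exact: Hc.
have Hmain : #|[set E : {set a} | (E \subset U) && P E]| * 2 ^ (d * #|J|) <= 2 ^ #|U| * (2 ^ d).-1 ^ #|J|.
  apply: (leq_trans (leq_mul Hstep1 (leqnn _))).
  rewrite HPairs big_distrl /=.
  apply: leq_trans; first (apply: leq_sum => ER HER; exact: Hbound).
  rewrite sum_nat_const.
  have -> : #|[pred ER : {set a} | ER \subset R]| = 2 ^ #|R|.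
    rewrite -card_powerset; apply: eq_card => ER; by rewrite powersetE.
  by rewrite -HRU expnD -mulnA [X in _ * X]mulnC.
set B := #|[set E : {set a} | (E \subset U) && P E]| in Hmain *.
have H2 : (2 ^ d).-1 ^ (#|J| - N) <= 2 ^ (d * (#|J| - N)).
  rewrite expnM; apply: leq_pow_base; exact: leq_pred.
have e1 : 2 ^ (d * #|J|) = 2 ^ (d * (#|J| - N)) * 2 ^ (d * N).
  by rewrite -expnD -mulnDr subnK.
have e2 : (2 ^ d).-1 ^ #|J| = (2 ^ d).-1 ^ N * (2 ^ d).-1 ^ (#|J| - N).
  by rewrite -expnD subnKC.
rewrite e1 e2 in Hmain.
have Hpos : 0 < 2 ^ (d * (#|J| - N)) by rewrite expn_gt0.
rewrite -(leq_pmul2r Hpos).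
move: Hmain H2 Hpos.
move: (2 ^ (d * (#|J| - N))) (2 ^ (d * N)) ((2 ^ d).-1 ^ N) ((2 ^ d).-1 ^ (#|J| - N)) (2 ^ #|U|) B.
move=> z x qn qr u b H1 H2 Hz.
apply: (leq_trans (n := u * (qn * qr))).
  by rewrite -mulnA [x * z]mulnC.
by rewrite mulnA leq_mul2l H2 orbT.
Qed.

Lemma odd_sum_odd (I : finType) (P : pred I) (f : I -> nat) :
  odd (\sum_(i | P i) odd (f i)) = odd (\sum_(i | P i) f i).
Proof.
apply: (big_ind2 (fun a b => odd a = odd b)) => //.
  by move=> a1 b1 a2 b2 H1 H2; rewrite !oddD H1 H2.
by move=> i _; case: (odd (f i)).
Qed.

Lemma card_interval (T : finType) (C D : {set T}) : C \subset D ->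
  #|[set X : {set T} | (C \subset X) && (X \subset D)]| = 2 ^ #|D :\: C|.
Proof.
move=> HCD; rewrite -card_powerset.
have -> : [set X : {set T} | (C \subset X) && (X \subset D)] =
          (fun Y => Y :|: C) @: powerset (D :\: C).
  apply/setP => X; rewrite inE; apply/andP/imsetP.
    move=> [H1 H2]; exists (X :\: C).
      by rewrite powersetE; apply: setSD.
    by rewrite setUC -{1}(setID X C) (setIidPr H1).
  move=> [Y]; rewrite powersetE => HY ->; split; first exact: subsetUr.
  by rewrite subUset HCD andbT (subset_trans HY) // subsetDl.
apply: card_in_imset => Y1 Y2; rewrite !powersetE => H1 H2 E.
have key : forall Y : {set T}, Y \subset D :\: C -> (Y :|: C) :\: C = Y.
  move=> Y HY; apply/setP => x; rewrite !inE.
  case: (boolP (x \in C)) => Hx /=; last by rewrite orbF.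
  case: (boolP (x \in Y)) => // HxY.
  by have := subsetP HY x HxY; rewrite !inE Hx.
by rewrite -(key _ H1) E key.
Qed.

Definition fam (T : finType) (S : {set T}) : {set {set T}} :=
  [set C : {set T} | (C \subset S) && (C != set0)].

Lemma mobius (T : finType) (S : {set T}) (q : {set T} -> bool) (C : {set T}) :
  C \in fam S ->
  odd (\sum_(X | (X \in fam S) && (C \subset X))
          odd (\sum_(D | (D \in fam S) && (X \subset D)) q D)) = q C.
Proof.
move=> HC.
rewrite odd_sum_odd.
rewrite (exchange_big_dep (fun D => (D \in fam S) && (C \subset D))) /=; last first.
  move=> X D /andP [_ H1] /andP [-> H2] /=; exact: subset_trans H1 H2.
have HCnt : forall D, (D \in fam S) && (C \subset D) ->
   \sum_(X | ((X \in fam S) && (C \subset X)) && ((D \in fam S) && (X \subset D))) q D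
   = q D * 2 ^ #|D :\: C|.
  move=> D /andP [HD HCD].
  rewrite -card_interval // mulnC -sum1_card big_distrl /= mul1n.
  move: (HD) (HC); rewrite !inE => /andP [HDS HD0] /andP [HCS HC0].
  apply: eq_bigl => X; rewrite !inE HDS HD0 /=.
  case: (boolP (C \subset X)) => HCX; rewrite ?andbF ?andbT //.
  case: (boolP (X \subset D)) => HXD; rewrite ?andbF ?andbT //.
  rewrite (subset_trans HXD HDS) /=.
  apply: contraNneq HC0 => HX; apply/eqP; apply/setP => x; rewrite inE.
  by apply/negP => Hx; have := subsetP HCX x Hx; rewrite HX inE.
rewrite (eq_bigr _ HCnt).
rewrite (bigD1 C) /=; last by rewrite HC subxx.
rewrite setDv cards0 expn0 muln1 oddD.
have -> : odd (\sum_(i | ((i \in fam S) && (C \subset i)) && (i != C)) q i * 2 ^ #|i :\: C|) = false.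
  apply/negbTE; rewrite -dvdn2; apply: dvdn_sum => D /andP [/andP [_ HCD] HDC].
  apply: dvdn_mull; apply: dvdn_exp => //.
  rewrite card_gt0; apply: contraNneq HDC => H0; apply/eqP/eqP; rewrite eqEsubset HCD andbT.
  by rewrite -setD_eq0 H0.
by rewrite addbF; case: (q C).
Qed.

Lemma pair_inv (T : finType) (a b c d : T) :
  [set a; b] = [set c; d] -> (a = c \/ a = d) /\ (b = c \/ b = d).
Proof. by move=> E; split; apply/set2P; rewrite -E ?set21 ?set22. Qed.

Definition hit n (E : {set {set 'I_n}}) (S : {set 'I_n}) (CC : {set {set 'I_n}}) (v : 'I_n) : bool :=
  [forall C : {set 'I_n}, ((C \subset S) && (C != set0)) ==>
          ((C \in CC) == odd (common_nbrs E (v |: C)))].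

Lemma hit_exists n (E0 : {set {set 'I_n}}) (S : {set 'I_n}) (CC : {set {set 'I_n}})
  (v : 'I_n) (w : {set 'I_n} -> 'I_n) :
  v \notin S ->
  (forall X, X \in fam S -> [&& w X \notin S, w X != v & [set v; w X] \notin E0]) ->
  (forall X s, X \in fam S -> s \in S -> adj E0 (w X) s = (s \in X)) ->
  exists2 Y : {set {set 'I_n}}, Y \subset [set [set v; w X] | X in fam S] & hit (E0 :|: Y) S CC v.
Proof.
move=> HvS Hw Hty.
have winj : {in fam S &, injective w}.
  move=> X1 X2 H1 H2 E; apply/setP => s.
  case: (boolP (s \in S)) => Hs.
    by rewrite -(Hty _ _ H1 Hs) -(Hty _ _ H2 Hs) E.
  move: H1 H2; rewrite !inE => /andP [H1 _] /andP [H2 _].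
  apply/idP/idP => Hx; [by have := subsetP H1 s Hx; rewrite (negbTE Hs) |
                        by have := subsetP H2 s Hx; rewrite (negbTE Hs)].
set W := w @: fam S.
pose base (C : {set 'I_n}) :=
  #|[set u | (u \notin W) && [forall x in v |: C, adj E0 u x]]|.
pose q (C : {set 'I_n}) := (C \in CC) (+) odd (base C).
pose z (X : {set 'I_n}) := odd (\sum_(D | (D \in fam S) && (X \subset D)) q D).
pose Y := [set [set v; w X] | X in [set X in fam S | z X]].
exists Y.
  by apply: imsetS; apply/subsetP => X; rewrite inE => /andP [].
set E := E0 :|: Y.
have HY : forall a b, [set a; b] \in Y -> exists2 X, X \in fam S & [set a; b] = [set v; w X].
  by move=> a b /imsetP [X]; rewrite inE => /andP [HX _] ->; exists X.
have ClA : forall u x, u \notin W -> x \in S -> adj E u x = adj E0 u x.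
  move=> u x HuW HxS; rewrite /adj /E inE.
  case: (boolP (u == x)) => //= Hux.
  case: (boolP ([set u; x] \in Y)) => [/HY [X HX Eq]|]; last by rewrite orbF.
  have [/and3P [HwS Hwv _]] := (Hw X HX, 0).
  have [[Huv|Huw] [Hxv|Hxw]] := pair_inv Eq.
  - by rewrite Huv Hxv eqxx in Hux.
  - by rewrite -Hxw HxS in HwS.
  - by move: HxS; rewrite Hxv (negbTE HvS).
  - by case/negP: HuW; rewrite Huw; apply: imset_f.
have ClA' : forall u, u \notin W -> adj E u v = adj E0 u v.
  move=> u HuW; rewrite /adj /E inE.
  case: (boolP (u == v)) => //= Huv.
  case: (boolP ([set u; v] \in Y)) => [/HY [X HX Eq]|]; last by rewrite orbF.
  have [[Huv'|Huw] _] := pair_inv Eq.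
  - by rewrite Huv' eqxx in Huv.
  - by case/negP: HuW; rewrite Huw; apply: imset_f.
have ClB : forall X x, X \in fam S -> x \in S -> adj E (w X) x = (x \in X).
  move=> X x HX HxS; rewrite -(Hty _ _ HX HxS) /adj /E inE.
  case: (boolP (w X == x)) => //= Hwx.
  case: (boolP ([set w X; x] \in Y)) => [/HY [X' HX' Eq]|]; last by rewrite orbF.
  have [/and3P [HwS _ _]] := (Hw X' HX', 0).
  have [_ [Hxv|Hxw]] := pair_inv Eq.
  - by move: HxS; rewrite Hxv (negbTE HvS).
  - by rewrite -Hxw HxS in HwS.
have ClC : forall X, X \in fam S -> adj E (w X) v = z X.
  move=> X HX; have /and3P [HwS Hwv HE0] := Hw X HX.
  rewrite /adj /E inE Hwv /= setUC (negbTE HE0) /=.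
  apply/idP/idP.
    move=> /imsetP [X']; rewrite inE => /andP [HX' HzX'] Eq.
    have [_ [Hwv'|Hww]] := pair_inv Eq.
      by rewrite Hwv' eqxx in Hwv.
    by rewrite (winj _ _ HX HX' Hww).
  by move=> HzX; apply: imset_f; rewrite inE HX HzX.
apply/forallP => C; apply/implyP => HC.
have HCf : C \in fam S by rewrite inE.
have HCS : C \subset S by case/andP: HC.
set P := [set u | [forall x in v |: C, adj E u x]].
have -> : common_nbrs E (v |: C) = #|P| by [].
rewrite -(cardsID W P).
have -> : P :\: W = [set u | (u \notin W) && [forall x in v |: C, adj E0 u x]].
  apply/setP => u; rewrite !inE andbC.
  case: (boolP (u \in W)) => HuW; rewrite ?andbF ?andbT //.
  apply/forall_inP/forall_inP => H x Hx; have := H x Hx;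
  (case/setU1P: Hx => [->|Hx]; [rewrite ClA' // | rewrite ClA //; exact: subsetP HCS x Hx]).
have -> : P :&: W = w @: [set X | (X \in fam S) && z X && (C \subset X)].
  apply/setP => u; rewrite inE; apply/andP/imsetP.
    move=> [HP /imsetP [X HX Hu]]; exists X => //.
    move: HP; rewrite inE Hu => /forall_inP HP.
    rewrite inE HX -(ClC _ HX) HP ?setU11 //=.
    apply/subsetP => x Hx; rewrite -(ClB _ _ HX (subsetP HCS x Hx)).
    by apply: HP; rewrite setU1r.
  move=> [X]; rewrite inE => /andP [/andP [HX HzX] HCX] ->.
  split; last exact: imset_f.
  rewrite inE; apply/forall_inP => x /setU1P [->|Hx]; first by rewrite ClC.
  by rewrite ClB ?(subsetP HCS x Hx) ?(subsetP HCX x Hx).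
rewrite card_in_imset; last by move=> X1 X2 H1 H2; apply: winj; [move: H1 | move: H2]; rewrite inE => /andP [/andP []].
have -> : #|[set X | (X \in fam S) && z X && (C \subset X)]| =
          \sum_(X | (X \in fam S) && (C \subset X)) z X.
  rewrite -sum1_card big_mkcond [RHS]big_mkcond /=; apply: eq_bigr => X _.
  rewrite inE; case: (X \in fam S); case: (z X); case: (C \subset X) => //.
rewrite oddD mobius //.
by rewrite /q -addbA addbb addbF.
Qed.

Lemma arith1 x w M : x < 2 ^ w -> w <= M -> x * 2 ^ M <= (2 ^ M).-1 * 2 ^ w.
Proof.
move=> Hx HwM.
have Hab : 2 ^ w <= 2 ^ M by rewrite leq_exp2l.
have Ha : 0 < 2 ^ w by rewrite expn_gt0.
move: Hx Hab Ha; move: (2 ^ w) (2 ^ M) => a b Hx Hab Ha.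
nia.
Qed.

Lemma disjP (T : finType) (A B : {set T}) :
  (forall x, x \in A -> x \in B -> False) -> [disjoint A & B].
Proof.
move=> H; rewrite -setI_eq0; apply/eqP/setP => x; rewrite !inE.
by apply/negP => /andP [H1 H2]; exact: H x H1 H2.
Qed.

Lemma card_lt_pow (T : finType) (D : {set T}) (Q : pred {set T}) (Y0 : {set T}) :
  Y0 \subset D -> ~~ Q Y0 -> #|[set Y : {set T} | (Y \subset D) && Q Y]| < 2 ^ #|D|.
Proof.
move=> HY0 HQ; rewrite -card_powerset; apply: proper_card; apply/properP; split.
  by apply/subsetP => Y; rewrite inE powersetE => /andP [].
by exists Y0; rewrite ?powersetE // inE (negbTE HQ) andbF.
Qed.

Lemma pairs_mem n (u x : 'I_n) : u != x -> [set u; x] \in pairs n.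
Proof. by move=> H; rewrite inE cards2 H. Qed.

Definition tyP n (E : {set {set 'I_n}}) (S : {set 'I_n}) (u : 'I_n) (X : {set 'I_n}) : bool :=
  [forall s in S, adj E u s == (s \in X)].

Lemma bad1_bound n (S B X : {set 'I_n}) (M N : nat) :
  (forall u, u \in B -> u \notin S) -> X \subset S -> #|S| <= M -> N <= #|B| ->
  #|[set E : {set {set 'I_n}} | (E \subset pairs n) && [forall u in B, ~~ tyP E S u X]]|
    * 2 ^ (M * N) <= 2 ^ #|pairs n| * (2 ^ M).-1 ^ N.
Proof.
move=> HBS HXS HSM HN.
have Hne : forall u s, u \in B -> s \in S -> u != s.
  by move=> u s Hu Hs; apply: contraNneq (HBS u Hu) => ->.
have pinj : forall u, u \in B -> {in S &, injective (fun s => [set u; s])}.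
  move=> u Hu s1 s2 H1 H2 /pair_inv [_ [Hs|//]].
  by move: H1; rewrite Hs => H1; have := HBS u Hu; rewrite H1.
apply: (@prod_count _ _ (pairs n) B (fun u => [set [set u; s] | s in S]) _
   (fun _ u Y => Y != [set [set u; s] | s in X])) => //.
- move=> u Hu; apply/subsetP => e /imsetP [s Hs ->]; exact: pairs_mem (Hne _ _ Hu Hs).
- move=> u u' Hu Hu' Hne'; apply: disjP => e /imsetP [s Hs ->] /imsetP [s' Hs' /pair_inv [[H|H] _]].
    by rewrite H eqxx in Hne'.
  by have := HBS u Hu; rewrite H Hs'.
- move=> E HE /forall_inP HP u Hu; apply/negP => /eqP Heq.
  have := HP u Hu; apply/negP; rewrite negbK; apply/forall_inP => s Hs.
  rewrite /adj (Hne _ _ Hu Hs) /=.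
  have -> : ([set u; s] \in E) = ([set u; s] \in E :&: [set [set u; s0] | s0 in S]).
    by rewrite inE (imset_f (fun s0 => [set u; s0]) Hs) andbT.
  rewrite Heq; apply/eqP; apply/idP/idP => [/imsetP [s' Hs' Heq']|Hx]; last first.
    exact: (imset_f (fun s0 => [set u; s0]) Hx).
  by rewrite (pinj u Hu s s') // (subsetP HXS).
- move=> ER u _ Hu; apply: arith1.
    apply: (@card_lt_pow _ _ _ [set [set u; s] | s in X]); last by rewrite negbK.
    exact: imsetS.
  by rewrite card_in_imset //; exact: pinj.
Qed.

Definition good1 n (E : {set {set 'I_n}}) (S B : {set 'I_n}) : bool :=
  [forall X in fam S, [exists u in B, tyP E S u X]].

Lemma hit_ext n (E1 E2 : {set {set 'I_n}}) (S : {set 'I_n}) (CC : {set {set 'I_n}}) (v : 'I_n) :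
  (forall u x, (x \in S) || (x == v) -> ([set u; x] \in E1) = ([set u; x] \in E2)) ->
  hit E1 S CC v = hit E2 S CC v.
Proof.
move=> H; apply: eq_forallb => C; case: (boolP ((C \subset S) && (C != set0))) => //= /andP [HCS _].
congr (_ == odd _); rewrite /common_nbrs; apply: eq_card => u; rewrite !inE.
apply: eq_forallb => x; case: (boolP (x \in v |: C)) => //= Hx.
rewrite /adj H //; case/setU1P: Hx => [->|Hx]; first by rewrite eqxx orbT.
by rewrite (subsetP HCS x Hx).
Qed.

Lemma bad2_bound n (S A B : {set 'I_n}) (CC : {set {set 'I_n}}) (M N : nat) :
  (forall u, u \in B -> u \notin S) -> (forall v, v \in A -> v \notin S) ->
  (forall v, v \in A -> v \notin B) ->
  #|fam S| <= M -> N <= #|A| ->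
  #|[set E : {set {set 'I_n}} | (E \subset pairs n) &&
       (good1 E S B && [forall v in A, ~~ hit E S CC v])]| * 2 ^ (M * N)
    <= 2 ^ #|pairs n| * (2 ^ M).-1 ^ N.
Proof.
move=> HBS HAS HAB HfM HN.
pose Dv (v : 'I_n) := [set [set v; u] | u in B].
have Hne : forall v u, v \in A -> u \in B -> v != u.
  by move=> v u Hv Hu; apply: contraNneq (HAB v Hv) => ->.
have DnoS : forall v' e x, v' \in A -> e \in Dv v' -> x \in e -> x \notin S.
  move=> v' e x Hv' /imsetP [u Hu ->] /set2P [->|->]; [exact: HAS | exact: HBS].
set UD := \bigcup_(j in A) Dv j.
have UDnoS : forall x s, s \in S -> [set x; s] \notin UD.
  move=> x s Hs; apply/negP => /bigcupP [v' Hv' He].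
  by have := DnoS v' _ s Hv' He (set22 _ _); rewrite Hs.
have adj_diff : forall (E : {set {set 'I_n}}) u s, s \in S -> adj (E :\: UD) u s = adj E u s.
  by move=> E u s Hs; rewrite /adj inE (negbTE (UDnoS u s Hs)).
have good_diff : forall E : {set {set 'I_n}}, good1 (E :\: UD) S B = good1 E S B.
  move=> E; apply: eq_forallb => X; congr (_ ==> _); apply: eq_existsb => u.
  congr (_ && _); apply: eq_forallb => s; case: (boolP (s \in S)) => //= Hs.
  by rewrite adj_diff.
apply: (@prod_count _ _ (pairs n) A Dv
   (fun E => good1 E S B && [forall v in A, ~~ hit E S CC v])
   (fun ER v Y => good1 ER S B && ~~ hit (ER :|: Y) S CC v)) => //.
- move=> v Hv; apply/subsetP => e /imsetP [u Hu ->]; exact: pairs_mem (Hne _ _ Hv Hu).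
- move=> v v' Hv Hv' Hvv; apply: disjP => e /imsetP [u Hu ->] /imsetP [u' Hu' /pair_inv [[H|H] _]].
    by rewrite H eqxx in Hvv.
  by have := HAB v Hv; rewrite H Hu'.
- move=> E HE /andP [Hg /forall_inP Hh] v Hv.
  rewrite good_diff Hg /=.
  have <- : hit E S CC v = hit (E :\: UD :|: E :&: Dv v) S CC v.
    apply: hit_ext => u x /orP [Hx|/eqP ->].
      have HD : ([set u; x] \in Dv v) = false.
        by apply/negP => Hd; case/negP: (UDnoS u x Hx); apply/bigcupP; exists v.
      by rewrite !inE (negbTE (UDnoS u x Hx)) HD andbF orbF.
    rewrite !inE.
    case: (boolP ([set u; v] \in Dv v)) => HD.
      by case: ([set u; v] \in E); rewrite ?andbT ?andbF ?orbT ?orbF.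
    rewrite andbF orbF; case: (boolP ([set u; v] \in UD)) => HU; last by [].
    move: HU => /bigcupP [v' Hv' He]; move: (He) => /imsetP [u' Hu' /pair_inv [_ [H|H]]].
      by move: He; rewrite -H => He; rewrite He in HD.
    by have := HAB v Hv; rewrite H Hu'.
  exact: Hh.
- move=> ER v HER Hv.
  case: (boolP (good1 ER S B)) => Hg; last first.
    rewrite (_ : #|_| = 0) //; apply/eqP; rewrite cards_eq0; apply/eqP/setP => Y.
    by rewrite !inE andbF.
  under eq_finset => Y do rewrite andTb.
  pose w (X : {set 'I_n}) := odflt v [pick u in B | tyP ER S u X].
  have Hw : forall X, X \in fam S -> (w X \in B) && tyP ER S (w X) X.
    move=> X HX; move/forall_inP: Hg => /(_ X HX) /existsP [u /andP [Hu Ht]].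
    rewrite /w; case: pickP => [u' /andP [H1 H2]|H] /=; first by rewrite H1 H2.
    by have := H u; rewrite Hu Ht.
  set Wv := [set [set v; w X] | X in fam S].
  have HWD : Wv \subset Dv v.
    apply/subsetP => e /imsetP [X HX ->]; apply: imset_f.
    by case/andP: (Hw X HX).
  have := @prod_count _ _ (Dv v) [set tt] (fun _ => Wv)
     (fun Y => ~~ hit (ER :|: Y) S CC v)
     (fun ER' _ Y => ~~ hit (ER :|: ER' :|: Y) S CC v) M 1.
  rewrite big_set1 cards1 muln1 expn1 => H; rewrite [(2 ^ M).-1 * _]mulnC; apply: H => //.
  + move=> Y HY HhY [] _.
    by rewrite -setUA [X in ER :|: X]setUC setID.
  + move=> ER' [] HER' _; apply: arith1; last first.
      by apply: leq_trans HfM; exact: leq_imset_card.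
    have HvS := HAS v Hv.
    have Hw1 : forall X, X \in fam S -> [&& w X \notin S, w X != v & [set v; w X] \notin ER :|: ER'].
      move=> X HX; have /andP [HwB _] := Hw X HX.
      rewrite (HBS _ HwB) eq_sym (Hne _ _ Hv HwB) /= inE negb_or; apply/andP; split.
        apply/negP => Hin; have := subsetP HER _ Hin; rewrite inE => /andP [Hn _].
        by case/negP: Hn; apply/bigcupP; exists v => //; apply: imset_f.
      apply/negP => Hin; have := subsetP HER' _ Hin; rewrite inE => /andP [Hn _].
      by case/negP: Hn; apply: imset_f.
    have Hw2 : forall X s, X \in fam S -> s \in S -> adj (ER :|: ER') (w X) s = (s \in X).
      move=> X s HX Hs; have /andP [HwB Ht] := Hw X HX.
      have <- : adj ER (w X) s = (s \in X) by move/forall_inP: Ht => /(_ s Hs) /eqP.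
      rewrite /adj inE; congr (_ && _).
      case: (boolP ([set w X; s] \in ER')) => Hin; last by rewrite orbF.
      have := subsetP HER' _ Hin; rewrite inE => /andP [_ HinD].
      by have := DnoS v _ s Hv HinD (set22 _ _); rewrite Hs.
    have [Y0 HY0 Hhit] := @hit_exists n (ER :|: ER') S CC v w HvS Hw1 Hw2.
    apply: (@card_lt_pow _ _ _ Y0) => //.
    by rewrite negbK.
Qed.

Lemma card_lt_ord n h : h <= n -> #|[set w : 'I_n | w < h]| = h.
Proof.
move=> Hh.
have -> : [set w : 'I_n | w < h] = [set widen_ord Hh i | i in 'I_h].
  apply/setP => w; rewrite inE; apply/idP/imsetP => [Hw|[i _ ->]]; last by rewrite /= ltn_ord.
  by exists (Ordinal Hw) => //; apply: val_inj.
rewrite card_imset ?card_ord //.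
by move=> x y /(congr1 val) /= /val_inj.
Qed.
Lemma card_ge_ord n h : h <= n -> #|[set w : 'I_n | h <= w]| = n - h.
Proof.
move=> Hh.
have -> : #|[set w : 'I_n | h <= w]| = #|~: [set w : 'I_n | w < h]|.
  by apply: eq_card => w; rewrite !inE leqNgt.
by rewrite cardsCs setCK card_ord (@card_lt_ord n h Hh).
Qed.

Lemma card_bigcup_le (T I : finType) (P : pred I) (F : I -> {set T}) :
  #|\bigcup_(i | P i) F i| <= \sum_(i | P i) #|F i|.
Proof.
elim/big_rec2: _ => [|i m U _ H]; first by rewrite cards0.
exact: leq_trans (leq_card_setU _ _).1 (leq_add (leqnn _) H).
Qed.

Lemma card_fam n (S : {set 'I_n}) : #|fam S| <= 2 ^ #|S|.
Proof.
rewrite -card_powerset; apply: subset_leq_card; apply/subsetP => X.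
by rewrite /fam inE powersetE => /andP [].
Qed.

Lemma fail_count n k : 1 <= k ->
  #|[set E : {set {set 'I_n}} | is_graph E && ~~ @good_graph k n E]| * 2 ^ (2 ^ k * (n./2 - k))
  <= 'C(n, k) * (2 ^ (2 ^ k) * (2 ^ k).+1 * (2 ^ #|pairs n| * (2 ^ (2 ^ k)).-1 ^ (n./2 - k))).
Proof.
move=> hk.
set M := 2 ^ k. set h := n./2. set N := h - k.
set Bnd := 2 ^ #|pairs n| * (2 ^ M).-1 ^ N.
pose B (S : {set 'I_n}) := [set w : 'I_n | w < h] :\: S.
pose A (S : {set 'I_n}) := [set w : 'I_n | h <= w] :\: S.
pose Bad1 (S X : {set 'I_n}) := [set E : {set {set 'I_n}} | (E \subset pairs n) && [forall u in B S, ~~ tyP E S u X]].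
pose Bad2 (S : {set 'I_n}) (CC : {set {set 'I_n}}) := [set E : {set {set 'I_n}} | (E \subset pairs n) &&
       (good1 E S (B S) && [forall v in A S, ~~ hit E S CC v])].
pose Big := \bigcup_(S : {set 'I_n} | #|S| == k) \bigcup_(CC : {set {set 'I_n}} | CC \subset fam S)
   ((\bigcup_(X | X \in fam S) Bad1 S X) :|: Bad2 S CC).
have Hhn : h <= n by rewrite /h; lia.
have Hsub : [set E : {set {set 'I_n}} | is_graph E && ~~ @good_graph k n E] \subset Big.
  apply/subsetP => E; rewrite inE => /andP [HE /forallPn [S]].
  rewrite negb_imply => /andP [HS /forallPn [CC]]; rewrite negb_imply => /andP [HCC Hno].
  apply/bigcupP; exists S => //; apply/bigcupP; exists CC => //.
  case: (boolP (good1 E S (B S))) => Hg.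
    apply/setUP; right; rewrite inE Hg /=; apply/andP; split; first exact: HE.
    apply/forall_inP => v Hv.
    apply: contra Hno => Hh; apply/existsP; exists v; apply/andP; split; last exact: Hh.
    by move: Hv; rewrite inE => /andP [].
  apply/setUP; left; move/forallPn: Hg => [X]; rewrite negb_imply => /andP [HX Hex].
  apply/bigcupP; exists X => //; rewrite inE; apply/andP; split; first exact: HE.
  apply/forall_inP => u Hu.
  by apply: contra Hex => Ht; apply/existsP; exists u; rewrite Hu.
have HNB : forall S : {set 'I_n}, #|S| = k -> N <= #|B S|.
  move=> S HS; rewrite /B cardsD (@card_lt_ord n h Hhn).
  have : #|[set w : 'I_n | w < h] :&: S| <= k by rewrite -HS subset_leq_card // subsetIr.
  rewrite /N; lia.
have HNA : forall S : {set 'I_n}, #|S| = k -> N <= #|A S|.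
  move=> S HS; rewrite /A cardsD (@card_ge_ord n h Hhn).
  have : #|[set w : 'I_n | h <= w] :&: S| <= k by rewrite -HS subset_leq_card // subsetIr.
  rewrite /N /h; lia.
have HbadS : forall (S : {set 'I_n}) CC, #|S| = k ->
    (\sum_(X | X \in fam S) #|Bad1 S X| + #|Bad2 S CC|) * 2 ^ (M * N) <= (2 ^ k).+1 * Bnd.
  move=> S CC HS.
  rewrite mulnDl mulSn [Bnd + _]addnC; apply: leq_add.
    rewrite big_distrl /=.
    apply: (@leq_trans (\sum_(X | X \in fam S) Bnd)).
      apply: leq_sum => X HX; apply: bad1_bound.
      - by move=> u; rewrite inE => /andP [].
      - by move: HX; rewrite inE => /andP [].
      - by rewrite HS /M ltnW // ltn_expl.
      - exact: HNB.
    rewrite sum_nat_const leq_mul2r; apply/orP; right.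
    by rewrite -HS card_fam.
  apply: bad2_bound.
  - by move=> u; rewrite inE => /andP [].
  - by move=> v; rewrite inE => /andP [].
  - by move=> v; rewrite !inE => /andP [_ H1]; apply/negP => /andP [_ H2]; rewrite /h in H1 H2; lia.
  - by rewrite /M -HS card_fam.
  - exact: HNA.
apply: (@leq_trans (#|Big| * 2 ^ (M * N))).
  by rewrite leq_mul2r subset_leq_card ?orbT.
apply: (@leq_trans ((\sum_(S : {set 'I_n} | #|S| == k) \sum_(CC : {set {set 'I_n}} | CC \subset fam S)
   (\sum_(X | X \in fam S) #|Bad1 S X| + #|Bad2 S CC|)) * 2 ^ (M * N))).
  rewrite leq_mul2r; apply/orP; right.
  apply: (leq_trans (card_bigcup_le _ _)); apply: leq_sum => S _.
  apply: (leq_trans (card_bigcup_le _ _)); apply: leq_sum => CC _.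
  apply: (leq_trans (leq_card_setU _ _).1); rewrite leq_add2r.
  exact: card_bigcup_le.
rewrite big_distrl /=.
apply: (@leq_trans (\sum_(S : {set 'I_n} | #|S| == k) (2 ^ (2 ^ k) * ((2 ^ k).+1 * Bnd)))).
  apply: leq_sum => S /eqP HS; rewrite big_distrl /=.
  apply: (@leq_trans (\sum_(CC : {set {set 'I_n}} | CC \subset fam S) ((2 ^ k).+1 * Bnd))).
    by apply: leq_sum => CC _; apply: HbadS.
  rewrite sum_nat_const leq_mul2r; apply/orP; right.
  have -> : #|[pred CC : {set {set 'I_n}} | CC \subset fam S]| = 2 ^ #|fam S|.
    by rewrite -card_powerset; apply: eq_card => CC; rewrite powersetE.
  by rewrite leq_exp2l // -HS card_fam.
rewrite sum_nat_const mulnA.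
have -> : #|[pred S : {set 'I_n} | #|S| == k]| = 'C(n, k).
  by rewrite -cardsE card_draws card_ord.
by rewrite /M -!mulnA.
Qed.

Lemma ffact_le_exp n k : n ^_ k <= n ^ k.
Proof.
elim: k n => [|k IH] n; first by rewrite ffactn0 expn0.
rewrite ffactnS expnS leq_mul2l; apply/orP; right.
apply: leq_trans (IH n.-1) _; apply: leq_pow_base; exact: leq_pred.
Qed.

Lemma bin_le_exp n k : 'C(n, k) <= n ^ k.
Proof.
apply: leq_trans (ffact_le_exp n k); rewrite -bin_ffact.
by rewrite leq_pmulr // fact_gt0.
Qed.

Lemma ffact_ge t J : (t - J) ^ J <= t ^_ J.
Proof.
elim: J => [|J IH]; first by rewrite ffactn0 expn0.
rewrite ffactnSr expnS mulnC leq_mul //.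
  apply: leq_trans IH; apply: leq_pow_base; lia.
lia.
Qed.

Lemma pascal_term q t J : J <= t -> 'C(t, J) * q ^ (t - J) <= (q + 1) ^ t.
Proof.
move=> HJ; rewrite Pascal.
have HJ' : J < t.+1 by [].
rewrite (bigD1 (Ordinal HJ')) //= exp1n muln1.
exact: leq_addr.
Qed.

Lemma poly_exp c j q : 0 < q -> exists T0, forall t, T0 <= t -> c * (t + 1) ^ j * q ^ t < (q + 1) ^ t.
Proof.
move=> Hq.
set J := j.+1.
set c' := c * q ^ J * J`!.
exists (J + j + 2 + c' * 2 ^ j) => t Ht.
set u := t - J.
have Hu1 : j + 2 + c' * 2 ^ j <= u by rewrite /u; lia.
have Ht1 : t + 1 <= 2 * u by rewrite /u; lia.
have HuJ : c' * (t + 1) ^ j < u ^ J.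
  apply: (@leq_trans (c' * 2 ^ j * u ^ j).+1).
    rewrite ltnS -mulnA leq_mul2l; apply/orP; right.
    by rewrite -expnMn leq_pow_base.
  rewrite /J expnS.
  have Hup : 0 < u ^ j by rewrite expn_gt0; apply/orP; left; lia.
  have : c' * 2 ^ j < u by lia.
  move: Hup; move: (u ^ j) (c' * 2 ^ j) => a b Ha Hb; nia.
have Hqt : q ^ t = q ^ J * q ^ u by rewrite -expnD /u subnKC //; lia.
have HJf : 0 < J`! by exact: fact_gt0.
have Hqu : 0 < q ^ u by rewrite expn_gt0 Hq.
have HtJ : J <= t by lia.
have H3 : u ^ J * q ^ u <= 'C(t, J) * J`! * q ^ u.
  by rewrite leq_mul2r bin_ffact ffact_ge orbT.
have H4 := pascal_term q HtJ.
rewrite -(ltn_pmul2r HJf) Hqt.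
move: HuJ H3 H4 Hqu HJf; rewrite /c' -/u.
move: ((t + 1) ^ j) (q ^ J) (q ^ u) (J`!) (u ^ J) ('C(t, J)) ((q + 1) ^ t) => X Qj Qu F UJ Cb P.
move=> H1 H2 H3 H4 H5.
have H6 : c * Qj * F * X * Qu < UJ * Qu by rewrite ltn_pmul2r.
nia.
Qed.

Import Order.TTheory GRing.Theory Num.Theory.

Lemma poly_upper (p : {poly rat}) (x : rat) : (1 <= x)%R ->
  (p.[x] <= (\sum_(i < size p) `|p`_i|) * x ^+ size p)%R.
Proof.
move=> Hx; rewrite horner_coef.
apply: (le_trans (ler_norm _)); apply: (le_trans (ler_norm_sum _ _ _)).
rewrite big_distrl /=; apply: ler_sum => i _.
rewrite normrM normrX (ger0_norm (le_trans ler01 Hx)).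
apply: ler_wpM2l; first exact: normr_ge0.
apply: ler_weXn2l => //; exact: ltnW (ltn_ord i).
Qed.

Lemma rat_bound (y : rat) : exists N : nat, (y <= N%:R)%R.
Proof.
exists (Num.Def.archi_bound `|y|); apply: (le_trans (ler_norm y)).
exact/ltW/archi_boundP/normr_ge0.
Qed.

Theorem mainTheorem14 (k : nat) (hk : (1 <= k)%N) :
  negligible (prob_fail (good_graph k)).
Proof.
move=> p Hp.
have [y Hy] := poly_pinfty_gt_lc Hp.
have [Ny HNy] := rat_bound y.
set S0 := (\sum_(i < size p) `|p`_i|)%R.
have [L HL] := rat_bound S0.
set d := size p. set j := (k + d)%N.
set q := (2 ^ (2 ^ k)).-1.
have H2k : (2 <= 2 ^ (2 ^ k))%N by rewrite -{1}(expn1 2) leq_exp2l // expn_gt0.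
have Hq : (0 < q)%N by rewrite /q; lia.
have Hq1 : (q + 1 = 2 ^ (2 ^ k))%N by rewrite /q; lia.
set c := (2 ^ (2 ^ k) * (2 ^ k).+1 * L * (2 * k + 2) ^ j)%N.
have [T0 HT0] := poly_exp c j Hq.
exists (maxn (maxn Ny 1) (2 * (T0 + k))) => n Hn.
have Hn1 : (1 <= n)%N by move: Hn; rewrite !geq_max => /andP [/andP [_ ->] _].
have HnNy : (Ny <= n)%N by move: Hn; rewrite !geq_max => /andP [/andP [-> _] _].
have HnT : (2 * (T0 + k) <= n)%N by move: Hn; rewrite !geq_max => /andP [_ ->].
set N := (n./2 - k)%N.
have HNT : (T0 <= N)%N by rewrite /N; lia.
have Hexp := HT0 N HNT.
have Hnb : (n <= (2 * k + 2) * (N + 1))%N by rewrite /N; nia.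
have Hfail := fail_count n hk.
have HC := bin_le_exp n k.
set F := #|[set E : {set {set 'I_n}} | is_graph E && ~~ good_graph k E]| in Hfail *.
set U := #|pairs n| in Hfail *.
have Hnat : (F * (L * n ^ d) < 2 ^ U)%N.
  rewrite -/q in Hfail.
  rewrite expnM in Hfail; rewrite Hq1 in Hexp.
  have H3 : (n ^ k * n ^ d <= (2 * k + 2) ^ j * (N + 1) ^ j)%N.
    by rewrite -expnD -expnMn leq_pow_base.
  rewrite /c in Hexp.
  have HV : (0 < 2 ^ U)%N by rewrite expn_gt0.
  move: Hfail HC H3 Hexp HV.
  move: ((2 ^ (2 ^ k)) ^ N) ('C(n, k)) (2 ^ (2 ^ k) * (2 ^ k).+1)%N (2 ^ U) (q ^ N) (n ^ d) (n ^ k)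
        ((2 * k + 2) ^ j) ((N + 1) ^ j) => P Cb c0 V Qn nd nk Kj Mj H1 H2 H3 H4 HV.
  have S1 : (F * (L * nd) * P <= Cb * (c0 * (V * Qn)) * (L * nd))%N.
    by rewrite mulnAC leq_mul2r H1 orbT.
  have S2 : (Cb * (c0 * (V * Qn)) * (L * nd) <= (nk * nd) * (c0 * L * Qn * V))%N.
    apply: (@leq_trans (nk * (c0 * (V * Qn)) * (L * nd))).
      by rewrite leq_mul2r leq_mul2r H2 !orbT.
    rewrite (_ : nk * (c0 * (V * Qn)) * (L * nd) = (nk * nd) * (c0 * L * Qn * V))%N //.
    lia.
  have S3 : ((nk * nd) * (c0 * L * Qn * V) <= (Kj * Mj) * (c0 * L * Qn * V))%N.
    by rewrite leq_mul2r H3 orbT.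
  have S4 : ((Kj * Mj) * (c0 * L * Qn * V) < P * V)%N.
    have : (c0 * L * Kj * Mj * Qn * V < P * V)%N by rewrite ltn_pmul2r.
    rewrite (_ : c0 * L * Kj * Mj * Qn * V = (Kj * Mj) * (c0 * L * Qn * V))%N //.
    lia.
  have S5 : (F * (L * nd) * P < V * P)%N.
    rewrite [(V * P)%N]mulnC; apply: leq_ltn_trans S4.
    exact: leq_trans S1 (leq_trans S2 S3).
  have HP : (0 < P)%N by rewrite lt0n; apply/negP => /eqP HP0; move: S5; rewrite HP0 !muln0.
  by rewrite ltn_pmul2r in S5.
have Hy' : (y <= n%:R)%R by apply: (le_trans HNy); rewrite ler_nat.
have Hpn : (0 < p.[n%:R])%R by apply: (lt_le_trans Hp); apply: Hy.
have Hup : (p.[n%:R] <= L%:R * n%:R ^+ d)%R.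
  apply: (le_trans (poly_upper p _)); first by rewrite ler1n.
  apply: ler_wpM2r => //; rewrite exprn_ge0 // ler0n.
rewrite /prob_fail -/U -/F.
rewrite ger0_norm; last by rewrite divr_ge0 // ler0n.
rewrite -[X in (_ < X)%R]div1r ltr_pdivlMr //.
have HU : (0 < (2 ^ U)%:R :> rat)%R by rewrite ltr0n expn_gt0.
apply: (le_lt_trans (y := (F%:R / (2 ^ U)%:R * (L%:R * n%:R ^+ d))%R)).
  by apply: ler_wpM2l => //; rewrite divr_ge0 // ler0n.
rewrite mulrAC ltr_pdivrMr // mul1r -natrX -!natrM ltr_nat.
exact: Hnat.
Qed.
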